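(* Define: - $K_n=\overline{\Sigma}_c^{-1}H_n^TR_n^{-1}$; - $\mathcal{K}=\mathrm{diag}(K_1,\dots,K_N)$ (block diagonal); - $\mathcal{H}=\mathrm{diag}(H_1,\dots,H_N)$ (block diagonal). Then for every $0<\varepsilon<1$ there exist a deterministic time $t_\varepsilon$ and a constant $c_\varepsilon$ such that $$\mathbf{z}^T\big(\beta_t\overline{L}\otimes I_M+\alpha_t\widetilde{\mathcal{K}}\mathcal{H}\big)\mathbf{z}\ge c_\varepsilon\beta_t\|\mathbf{z}_{\mathcal{C}^\perp}\|^2$$ for all $t\ge t_\varepsilon$, all $\mathbf{z}\in\mathbb{R}^{NM}$, and all matrices $\widetilde{\mathcal{K}}\in\mathbb{R}^{NM\times\sum_nM_n}$ with $\|\widetilde{\mathcal{K}}\mathcal{H}-\mathcal{K}\mathcal{H}\|\le\varepsilon$.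
   Context: The data are as follows. - $H_n\in\mathbb{R}^{M_n\times M}$ for $n=1,\dots,N$. - $R_n$ are symmetric positive definite $M_n\times M_n$ matrices. - $\overline{\Sigma}_c=\frac1N\sum_{n=1}^NH_n^TR_n^{-1}H_n$ is assumed invertible. - $\overline{L}$ is the expectation of a random $N\times N$ graph Laplacian of simple undirected graphs on $\{1,\dots,N\}$, with $\lambda_2(\overline{L})>0$, where $\lambda_2$ is the second smallest eigenvalue. - The weights are $\alpha_t=a/(t+1)^{\tau_1}$ and $\beta_t=b/(t+1)^{\tau_2}$ with $a,b>0$, $0<\tau_2\le\tau_1\le1$, and $\tau_1>\tau_2+\frac1{2+\varepsilon_1}+\frac12$ for some $\varepsilon_1>0$. The consensus subspace is $\mathcal{C}=\{\mathbf{1}_N\otimes\mathbf{a}:\mathbf{a}\in\mathbb{R}^M\}$, and $\mathbf{z}_{\mathcal{C}^\perp}$ is the orthogonal projection of $\mathbf{z}$ onto the orthogonal complement $\mathcal{C}^\perp$. $\otimes$ is the Kronecker product and $\|\cdot\|$ the Euclidean norm or induced matrix 2-norm. *)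

(* Defs.v *)
From HB Require Import structures.
From mathcomp Require Import all_boot all_order all_algebra.
From mathcomp Require Import all_classical all_reals all_analysis.
Set Implicit Arguments. Unset Strict Implicit. Unset Printing Implicit Defensive.
Import Order.TTheory GRing.Theory Num.Theory.
Local Open Scope ring_scope.

Section Defs.
Variable R : realType.

Definition vnorm (n : nat) (x : 'cV[R]_n) : R := Num.sqrt (\sum_i (x i 0) ^+ 2).

Definition qform (n : nat) (z : 'cV[R]_n) (A : 'M[R]_n) : R := (z^T *m A *m z) 0 0.

Definition opnorm (m n : nat) (A : 'M[R]_(m, n)) : R :=
  sup [set vnorm (A *m x) | x in [set x : 'cV[R]_n | vnorm x = 1]].

Definition spd (n : nat) (A : 'M[R]_n) : Prop :=
  A^T = A /\ forall x : 'cV[R]_n, x != 0 -> 0 < qform x A.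

Definition sorted_spectrum (n : nat) (A : 'M[R]_n) (s : seq R) : Prop :=
  sorted <=%R s /\ char_poly A = \prod_(x <- s) ('X - x%:P).

(* lambda_2(A) > 0 : the second smallest eigenvalue is positive *)
Definition lambda2_pos (n : nat) (A : 'M[R]_n) : Prop :=
  exists s, sorted_spectrum A s /\ 0 < s`_1.

Definition graph (N : nat) := {ffun 'I_N * 'I_N -> bool}.

Definition simple_graph (N : nat) (G : graph N) : bool :=
  [forall i, forall j, G (i, j) == G (j, i)] && [forall i, ~~ G (i, i)].

Definition laplacian (N : nat) (G : graph N) : 'M[R]_N :=
  \matrix_(i, j) ((if i == j then (#|[set k | G (i, k)]|)%:R else 0) - (G (i, j))%:R).

Definition graph_distribution (N : nat) (p : {ffun graph N -> R}) : Prop :=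
  (forall G, 0 <= p G) /\ \sum_G p G = 1 /\ (forall G, p G != 0 -> simple_graph G).

Definition Lbar (N : nat) (p : {ffun graph N -> R}) : 'M[R]_N :=
  \sum_G p G *: laplacian G.

(* Lbar (x) I_M, with R^{NM} written as the block space of dimension \sum_(i<N) M *)
Definition kronI (N M : nat) (L : 'M[R]_N) : 'M[R]_(\sum_(i < N) M) :=
  \mxblock_(i < N, j < N) ((L i j)%:M : 'M[R]_(M, M)).

(* consensus vector 1_N (x) a *)
Definition cons_vec (N M : nat) (a : 'cV[R]_M) : 'cV[R]_(\sum_(i < N) M) :=
  \mxcol_(i < N) a.

Definition is_Cperp_proj (N M : nat) (z w : 'cV[R]_(\sum_(i < N) M)) : Prop :=
  (exists a : 'cV[R]_M, z - w = cons_vec N a) /\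
  (forall a : 'cV[R]_M, (cons_vec N a)^T *m w = 0).

Section Obs.
Variables (N M : nat) (Mn : 'I_N -> nat).
Variables (H : forall n : 'I_N, 'M[R]_(Mn n, M)) (Rm : forall n : 'I_N, 'M[R]_(Mn n)).

Definition Sigma_c : 'M[R]_M :=
  (N%:R)^-1 *: \sum_(n < N) ((H n)^T *m invmx (Rm n) *m H n).

Definition Kgain (n : 'I_N) : 'M[R]_(M, Mn n) :=
  invmx Sigma_c *m (H n)^T *m invmx (Rm n).

Definition calK : 'M[R]_(\sum_(i < N) M, \sum_(i < N) Mn i) :=
  \mxblock_(i < N, j < N) (if i == j then Kgain j else 0 : 'M[R]_(M, Mn j)).

Definition calH : 'M[R]_(\sum_(i < N) Mn i, \sum_(i < N) M) :=
  \mxblock_(i < N, j < N) (if i == j then H i else 0 : 'M[R]_(Mn i, M)).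
End Obs.

Definition alpha_w (a tau1 : R) (t : nat) : R := a / ((t.+1)%:R `^ tau1).
Definition beta_w (b tau2 : R) (t : nat) : R := b / ((t.+1)%:R `^ tau2).

End Defs.

(* Main.v *)
Require Import Defs.
From HB Require Import structures.
From mathcomp Require Import all_boot all_order all_algebra.
From mathcomp Require Import all_classical all_reals all_analysis.
From mathcomp Require Import ring lra.
Import Order.TTheory GRing.Theory Num.Theory.
Set Implicit Arguments. Unset Strict Implicit. Unset Printing Implicit Defensive.
Local Open Scope ring_scope.

Section Basic.
Variable R : realType.

Definition bf n (B : 'M[R]_n) (x y : 'cV[R]_n) : R := (x^T *m B *m y) 0 0.
Definition dot n (x y : 'cV[R]_n) : R := (x^T *m y) 0 0.

Lemma dotE n (x y : 'cV[R]_n) : dot x y = \sum_i x i 0 * y i 0.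
Proof. by rewrite /dot mxE; apply: eq_bigr => i _; rewrite mxE. Qed.

Lemma dotC n (x y : 'cV[R]_n) : dot x y = dot y x.
Proof. by rewrite !dotE; apply: eq_bigr => i _; rewrite mulrC. Qed.

Lemma dot_ge0 n (x : 'cV[R]_n) : 0 <= dot x x.
Proof. by rewrite dotE; apply: sumr_ge0 => i _; rewrite -expr2 sqr_ge0. Qed.

Lemma vnorm_sq n (x : 'cV[R]_n) : vnorm x ^+ 2 = dot x x.
Proof.
rewrite /vnorm sqr_sqrtr; last by apply: sumr_ge0 => i _; rewrite sqr_ge0.
by rewrite dotE; apply: eq_bigr => i _; rewrite expr2.
Qed.

Lemma vnorm_ge0 n (x : 'cV[R]_n) : 0 <= vnorm x.
Proof. exact: sqrtr_ge0. Qed.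

Lemma vnorm_dot n (x : 'cV[R]_n) : vnorm x = Num.sqrt (dot x x).
Proof. by rewrite -vnorm_sq sqrtr_sqr ger0_norm // vnorm_ge0. Qed.

Lemma dot_eq0 n (x : 'cV[R]_n) : dot x x = 0 -> x = 0.
Proof.
rewrite dotE => h; apply/matrixP => i j; rewrite (ord1 j) mxE.
have h0 : forall k, xpredT k -> 0 <= x k 0 * x k 0.
  by move=> k _; rewrite -expr2 sqr_ge0.
have /eqP := psumr_eq0P h0 h (i:=i) isT.
by rewrite mulf_eq0 orbb => /eqP.
Qed.

Lemma entry_le_vnorm n (x : 'cV[R]_n) i : `|x i 0| <= vnorm x.
Proof.
rewrite -sqrtr_sqr /vnorm ler_sqrt; last by apply: sumr_ge0 => k _; rewrite sqr_ge0.
rewrite (bigD1 i) //= lerDl; apply: sumr_ge0 => k _; rewrite sqr_ge0.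
by [].
Qed.

Lemma bfDl n (B : 'M[R]_n) x1 x2 y : bf B (x1 + x2) y = bf B x1 y + bf B x2 y.
Proof. by rewrite /bf linearD /= !mulmxDl mxE. Qed.
Lemma bfDr n (B : 'M[R]_n) x y1 y2 : bf B x (y1 + y2) = bf B x y1 + bf B x y2.
Proof. by rewrite /bf !mulmxDr mxE. Qed.
Lemma bfZl n (B : 'M[R]_n) c x y : bf B (c *: x) y = c * bf B x y.
Proof. by rewrite /bf linearZ /= -!scalemxAl mxE. Qed.
Lemma bfZr n (B : 'M[R]_n) c x y : bf B x (c *: y) = c * bf B x y.
Proof. by rewrite /bf -!scalemxAr mxE. Qed.
Lemma bfDm n (A B : 'M[R]_n) x y : bf (A + B) x y = bf A x y + bf B x y.
Proof. by rewrite /bf mulmxDr mulmxDl mxE. Qed.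
Lemma bfZm n (A : 'M[R]_n) c x y : bf (c *: A) x y = c * bf A x y.
Proof. by rewrite /bf -scalemxAr -scalemxAl mxE. Qed.
Lemma bfBm n (A B : 'M[R]_n) x y : bf (A - B) x y = bf A x y - bf B x y.
Proof. by rewrite bfDm /bf mulmxN mulNmx; congr (_ + _); rewrite mxE. Qed.
Lemma bf_sym n (B : 'M[R]_n) x y : B^T = B -> bf B x y = bf B y x.
Proof.
move=> hB; rewrite /bf -[in RHS](trmxK x) -[in RHS]hB.
by rewrite -!trmx_mul [(_^T) 0 0]mxE mulmxA.
Qed.
Lemma bf1 n (x y : 'cV[R]_n) : bf 1%:M x y = dot x y.
Proof. by rewrite /bf mulmx1. Qed.
Lemma bf_dot n (B : 'M[R]_n) x y : bf B x y = dot x (B *m y).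
Proof. by rewrite /bf /dot mulmxA. Qed.

Lemma bf_bound n (A : 'M[R]_n) : exists C, 0 <= C /\
  forall x y, `|bf A x y| <= C * vnorm x * vnorm y.
Proof.
exists (\sum_i \sum_j `|A i j|); split.
  by apply: sumr_ge0 => i _; apply: sumr_ge0 => j _.
move=> x y.
have -> : bf A x y = \sum_i \sum_j (x i 0 * A i j * y j 0).
  rewrite /bf mxE exchange_big /=; apply: eq_bigr => j _; rewrite mxE mulr_suml.
  by apply: eq_bigr => i _; rewrite !mxE.
rewrite mulr_suml mulr_suml; apply: (le_trans (ler_norm_sum _ _ _)).
apply: ler_sum => i _; rewrite mulr_suml mulr_suml.
apply: (le_trans (ler_norm_sum _ _ _)); apply: ler_sum => j _.
rewrite !normrM (_ : _ * _ * _ = `|A i j| * (`|x i 0| * `|y j 0|)); last by ring.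
rewrite -mulrA; apply: ler_wpM2l => //.
by apply: ler_pM => //; apply: entry_le_vnorm.
Qed.

Lemma psd_cs n (B : 'M[R]_n) x y : B^T = B -> (forall v, 0 <= bf B v v) ->
  bf B x y ^+ 2 <= bf B x x * bf B y y.
Proof.
move=> hs hp.
have key t : 0 <= bf B x x + 2 * t * bf B x y + t ^+ 2 * bf B y y.
  have := hp (x + t *: y).
  rewrite !bfDl !bfDr !bfZl !bfZr (bf_sym x y hs).
  by congr (_ <= _); ring.
set a := bf B x x; set b := bf B x y; set c := bf B y y.
move: key; rewrite -/a -/b -/c => key.
have a0 : 0 <= a by apply: hp.
have c0 : 0 <= c by apply: hp.
have [c_eq0|c_gt0] := eqVneq c 0.
  rewrite c_eq0 mulr0.
  have [b0|bn0] := eqVneq b 0; first by rewrite b0 expr2 mulr0.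
  have := key (- (a + 1) / (2 * b)).
  rewrite c_eq0 mulr0 addr0.
  have -> : 2 * (- (a + 1) / (2 * b)) * b = - (a + 1).
    by field.
  by move=> h; exfalso; clear key hp hs; lra.
have cp : 0 < c by rewrite lt_neqAle eq_sym c_gt0 c0.
have := key (- b / c).
have -> : a + 2 * (- b / c) * b + (- b / c) ^+ 2 * c = a - b ^+ 2 / c.
  by field; rewrite c_gt0.
rewrite subr_ge0 ler_pdivrMr //.
Qed.

Lemma cs n (x y : 'cV[R]_n) : `|dot x y| <= vnorm x * vnorm y.
Proof.
have h := @psd_cs n 1%:M x y (@trmx1 _ n) (fun v => ltac:(rewrite bf1; exact: dot_ge0)).
rewrite !bf1 in h.
rewrite -sqrtr_sqr !vnorm_dot -sqrtrM ?dot_ge0 //.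
by rewrite ler_sqrt // mulr_ge0 // dot_ge0.
Qed.

End Basic.
Section Op.
Variable R : realType.

Lemma vnormZ n (c : R) (x : 'cV[R]_n) : vnorm (c *: x) = `|c| * vnorm x.
Proof.
rewrite !vnorm_dot -sqrtr_sqr -sqrtrM ?sqr_ge0 //; congr Num.sqrt.
rewrite !dotE mulr_sumr; apply: eq_bigr => i _; rewrite !mxE; ring.
Qed.

Lemma vnorm0 n : vnorm (0 : 'cV[R]_n) = 0.
Proof. by rewrite vnorm_dot dotE big1 ?sqrtr0 // => i _; rewrite mxE mul0r. Qed.

Lemma vnorm_eq0 n (x : 'cV[R]_n) : vnorm x = 0 -> x = 0.
Proof.
move=> h; apply: dot_eq0; rewrite -vnorm_sq h; ring.
Qed.

Lemma vnormA_sq m n (A : 'M[R]_(m, n)) y : vnorm (A *m y) ^+ 2 = bf (A^T *m A) y y.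
Proof. by rewrite vnorm_sq /dot /bf trmx_mul !mulmxA. Qed.

Lemma opnorm_le m n (A : 'M[R]_(m, n)) x : vnorm (A *m x) <= opnorm A * vnorm x.
Proof.
have [->|xn0] := eqVneq x 0; first by rewrite mulmx0 !vnorm0 mulr0.
have vx0 : 0 < vnorm x.
  rewrite lt_neqAle vnorm_ge0 andbT eq_sym; apply/eqP => h.
  by move: xn0; rewrite (vnorm_eq0 h) eqxx.
set x' := (vnorm x)^-1 *: x.
have ux' : vnorm x' = 1.
  by rewrite vnormZ ger0_norm ?invr_ge0 ?vnorm_ge0 // mulVf // gt_eqF.
have [C [C0 hC]] := bf_bound (A^T *m A).
have hS : has_sup [set vnorm (A *m y) | y in [set y : 'cV[R]_n | vnorm y = 1]].
  split; first by exists (vnorm (A *m x')), x'.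
  exists (1 + C) => _ [y /= hy <-].
  have h1 := hC y y; rewrite hy !mulr1 -vnormA_sq in h1.
  have h2 := vnorm_ge0 (A *m y).
  have h3 : vnorm (A *m y) ^+ 2 <= C by apply: le_trans h1; apply: ler_norm.
  nra.
have := sup_upper_bound hS; move=> /(_ (vnorm (A *m x'))).
move=> /(_ ltac:(by exists x')).
have -> : A *m x' = (vnorm x)^-1 *: (A *m x) by rewrite /x' scalemxAr.
rewrite vnormZ ger0_norm ?invr_ge0 ?vnorm_ge0 //.
by rewrite ler_pdivrMl // mulrC.
Qed.

End Op.
Section Kernel.
Variable R : realType.

Lemma two_kernel_dvd N (L : 'M[R]_N) (U : 'M[R]_(2, N)) :
  row_free U -> U *m L = 0 -> 'X ^+ 2 %| char_poly L.
Proof.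
move=> /eqP rU UL0.
have N2 : (2 <= N)%N by rewrite -{1}rU rank_leq_col.
set E := row_ebase U; set C := col_ebase U.
have hE : pid_mx 2 *m E = invmx C *m U.
  by rewrite -[in RHS](mulmx_ebase U) rU -!mulmxA mulKmx // col_ebase_unit.
have hEL : forall (k : 'I_N) (j : 'I_N), (k < 2)%N -> (E *m L) k j = 0.
  move=> k j hk.
  have : (pid_mx 2 *m E *m L) (Ordinal hk) j = 0.
    by rewrite hE -mulmxA UL0 mulmx0 mxE.
  rewrite -mulmxA mxE (bigD1 k) //= mxE eqxx hk mul1r big1 ?addr0 //.
  move=> l hl; rewrite mxE /=.
  have -> : (nat_of_ord k == nat_of_ord l) = false by apply/negbTE; rewrite eq_sym.
  by rewrite mul0r.
set Ep := map_mx polyC E.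
set d := \row_(k < N) (if (k < 2)%N then 'X else 1 : {poly R}).
set Q := \matrix_(k < N, j < N) (if (k < 2)%N then Ep k j else (Ep *m char_poly_mx L) k j).
have hP : Ep *m char_poly_mx L = 'X *: Ep - map_mx polyC (E *m L).
  by rewrite /char_poly_mx mulmxBr mul_mx_scalar -map_mxM.
have hQ : Ep *m char_poly_mx L = diag_mx d *m Q.
  apply/matrixP => k j; rewrite mul_diag_mx [RHS]mxE [d 0 k]mxE [Q k j]mxE.
  case: ifP => hk; last by rewrite mul1r.
  have := hEL k j hk; rewrite mxE => h0.
  by rewrite hP !mxE h0 polyC0 subr0.
have hd : \prod_(k < N) d 0 k = 'X ^+ 2.
  rewrite (eq_bigr (fun k : 'I_N => if (k < 2)%N then 'X else 1)); last by move=> k _; rewrite mxE.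
  rewrite -big_mkcond /= -(big_ord_widen N (fun _ => 'X)) //.
  by rewrite !big_ord_recr big_ord0 /= mul1r expr2.
have := congr1 determinant hQ.
rewrite det_mulmx det_mulmx det_diag hd /Ep det_map_mx /= mul_polyC.
move=> h.
have hE0 : \det E != 0 by rewrite -unitfE -unitmxE row_ebase_unit.
rewrite -(dvdpZr _ _ hE0) /char_poly h.
exact: dvdp_mulIl.
Qed.

Lemma spectrum_not_dvd (s : seq R) :
  sorted <=%R s -> 0 < s`_1 -> ~ ('X ^+ 2 %| \prod_(x <- s) ('X - x%:P)).
Proof.
case: s => [|s0 [|s1 s']] //=; first by rewrite ltxx.
  by rewrite ltxx.
move=> /andP[_ hp] hs1.
have hall : all (fun x => 0 < x) (s1 :: s').
  rewrite /= hs1 /=; apply/allP => x hx.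
  have := order_path_min (@le_trans _ R) hp; move=> /allP /(_ x hx).
  by move=> h; apply: lt_le_trans h.
set Q := \prod_(x <- s1 :: s') ('X - x%:P).
have nQ : ~~ root Q 0.
  rewrite /Q root_prod_XsubC; apply/negP => h0.
  by move/allP: hall => /(_ 0 h0); rewrite ltxx.
have cQ : coprimep ('X ^+ 2) Q.
  apply: coprimep_expl; rewrite coprimep_sym.
  by rewrite -(subr0 'X) -polyC0 coprimep_XsubC.
rewrite big_cons -/Q Gauss_dvdpl // => h.
have := dvdp_leq _ h; rewrite size_XsubC size_polyXn.
by move=> /(_ ltac:(by rewrite -size_poly_eq0 size_XsubC)).
Qed.

End Kernel.
Section Gap.
Variable R : realType.

Lemma vnorm_mul n (x : 'cV[R]_n) : vnorm x * vnorm x = dot x x.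
Proof. by rewrite -vnorm_sq expr2. Qed.

Lemma sum_const_bf n (x y : 'cV[R]_n) :
  bf (const_mx 1) x y = (\sum_i x i 0) * (\sum_i y i 0).
Proof.
rewrite /bf mxE mulr_sumr; apply: eq_bigr => j _; rewrite mulrC [RHS]mulrC; congr (_ * _).
by rewrite mxE; apply: eq_bigr => i _; rewrite !mxE mulr1.
Qed.

Lemma kernel_trivial N (L : 'M[R]_N) :
  L^T = L -> L *m (const_mx 1 : 'cV[R]_N) = 0 -> lambda2_pos L ->
  forall x : 'cV[R]_N, \sum_i x i 0 = 0 -> L *m x = 0 -> x = 0.
Proof.
move=> Ls L1 [s [[ss hs] s1]] x sx Lx.
have Lsym i j : L i j = L j i by rewrite -[in LHS]Ls mxE.
apply/eqP/negPn/negP => xn0.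
have : [exists k, x k 0 != 0].
  apply: contraNT xn0 => /existsPn hall; apply/eqP.
  by apply/matrixP => i j; rewrite (ord1 j) mxE; apply/eqP/negPn; apply: hall.
move=> /existsP [k xk].
have N0 : (0 < N)%N by exact: leq_trans (ltn0Sn k) (ltn_ord k).
set U := \matrix_(i < 2, j < N) (if i == 0 then 1 else x j 0).
have UL : U *m L = 0.
  apply/matrixP => i j; rewrite !mxE.
  have [->|] := eqVneq i 0.
    have := congr1 (fun M : 'cV[R]_N => M j 0) L1; rewrite !mxE => h.
    apply: (etrans _ h).
    by apply: eq_bigr => l _; rewrite !mxE eqxx mul1r mulr1 Lsym.
  move=> /negPf i0; have := congr1 (fun M : 'cV[R]_N => M j 0) Lx; rewrite !mxE => h.
  apply: (etrans _ h).
  by apply: eq_bigr => l _; rewrite !mxE i0 Lsym mulrC.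
have fU : row_free U.
  apply: inj_row_free => v vU.
  have e l : v 0 0 + v 0 1 * x l 0 = 0.
    have := congr1 (fun M : 'rV[R]_N => M 0 l) vU; rewrite !mxE !big_ord_recr big_ord0 /= !mxE /=.
    have -> : widen_ord (leqnSn 1) ord_max = 0 :> 'I_2 by apply: val_inj.
    have -> : (ord_max : 'I_2) = 1 by apply: val_inj.
    by rewrite add0r mulr1.
  have v0 : v 0 0 = 0.
    have : \sum_l (v 0 0 + v 0 1 * x l 0) = 0 by rewrite big1.
    rewrite big_split /= -mulr_sumr sx mulr0 addr0 sumr_const card_ord.
    move/eqP; rewrite -mulr_natr mulf_eq0 pnatr_eq0 => /orP [/eqP //|].
    by move=> /eqP N00; move: N0; rewrite N00.
  have v1 : v 0 1 = 0.
    by have := e k; rewrite v0 add0r => /eqP; rewrite mulf_eq0 (negbTE xk) orbF => /eqP.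
  apply/rowP => i; rewrite mxE.
  case: i => [[|[|//]]] hi.
    by rewrite (_ : Ordinal hi = 0) //; apply: val_inj.
  by rewrite (_ : Ordinal hi = 1) //; apply: val_inj.
have := two_kernel_dvd fU UL; rewrite hs.
by apply: spectrum_not_dvd.
Qed.

Lemma spectral_gap N (L : 'M[R]_N) :
  L^T = L -> (forall v, 0 <= bf L v v) -> L *m (const_mx 1 : 'cV[R]_N) = 0 -> lambda2_pos L ->
  exists lam, 0 < lam /\ forall v : 'cV[R]_N, \sum_i v i 0 = 0 ->
    lam * dot v v <= bf L v v.
Proof.
move=> Ls Lp L1 l2.
have kt := kernel_trivial Ls L1 l2.
set B := L + const_mx 1.
have Bs : B^T = B by rewrite /B linearD /= Ls trmx_const.
have BE v : bf B v v = bf L v v + (\sum_i v i 0) ^+ 2.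
  by rewrite /B bfDm sum_const_bf expr2.
have Bp v : 0 <= bf B v v by rewrite BE addr_ge0 ?sqr_ge0.
have Lker x : bf L x x = 0 -> L *m x = 0.
  move=> h; apply: dot_eq0.
  have := psd_cs (L *m x) x Ls Lp; rewrite h mulr0 bf_dot.
  move=> h2; have : dot (L *m x) (L *m x) ^+ 2 == 0.
    by rewrite eq_le h2 sqr_ge0.
  by rewrite sqrf_eq0 => /eqP.
have Bu : B \in unitmx.
  rewrite -row_free_unit; apply: inj_row_free => v vB.
  have Bx : B *m v^T = 0 by rewrite -Bs -trmx_mul vB trmx0.
  have h0 : bf B v^T v^T = 0 by rewrite bf_dot Bx /dot mulmx0 mxE.
  rewrite BE in h0.
  have hL0 := Lp v^T; have hs0 := sqr_ge0 (\sum_i v^T i 0).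
  have hL : bf L v^T v^T = 0 by lra.
  have hs : (\sum_i v^T i 0) ^+ 2 = 0 by lra.
  move/eqP: hs; rewrite sqrf_eq0 => /eqP hs.
  have := kt _ hs (Lker _ hL) => /(congr1 trmx); rewrite trmxK trmx0 //.
set Bi := invmx B.
have [C1 [C10 hC1]] := bf_bound B.
have [C2 [C20 hC2]] := bf_bound (Bi^T *m Bi).
exists (1 / (C1 * C2 + 1)); split; first by rewrite divr_gt0 // ltr_pwDr // mulr_ge0.
move=> v sv.
set y := Bi *m v.
have hBy : bf B v y = dot v v by rewrite bf_dot /y mulKVmx.
have hyy : dot y y <= C2 * dot v v.
  rewrite -vnorm_sq vnormA_sq; apply: le_trans (ler_norm _) _.
  by rewrite -vnorm_mul mulrA; apply: hC2.
have hByy : bf B y y <= C1 * dot y y.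
  by rewrite -vnorm_mul mulrA; apply: le_trans (ler_norm _) _; apply: hC1.
have cs2 := psd_cs v y Bs Bp; rewrite hBy in cs2.
have qE : bf B v v = bf L v v by rewrite BE sv expr2 mulr0 addr0.
rewrite qE in cs2.
set D := dot v v in hyy cs2 *; set q := bf L v v in cs2 qE *.
have D0 : 0 <= D by apply: dot_ge0.
have q0 : 0 <= q by apply: Lp.
have yy0 : 0 <= dot y y by apply: dot_ge0.
have h1 : D ^+ 2 <= q * (C1 * C2 * D).
  apply: (le_trans cs2); apply: ler_wpM2l => //.
  apply: (le_trans hByy); rewrite -mulrA; apply: ler_wpM2l => //.
rewrite mul1r mulrC ler_pdivrMr ?ltr_pwDr ?mulr_ge0 //.
have [->|Dn0] := eqVneq D 0; first by rewrite mulr_ge0 // addr_ge0 ?mulr_ge0.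
have Dp : 0 < D by rewrite lt_neqAle eq_sym Dn0 D0.
have h2 : D <= q * (C1 * C2).
  by rewrite -(ler_pM2r Dp) -mulrA -expr2.
have h3 : 0 <= C1 * C2 by rewrite mulr_ge0.
nra.
Qed.

End Gap.
Section Lap.
Variable R : realType.

Lemma bf_sum n (A : 'M[R]_n) x y : bf A x y = \sum_i \sum_j (x i 0 * A i j * y j 0).
Proof.
rewrite /bf mxE exchange_big /=; apply: eq_bigr => j _; rewrite mxE mulr_suml.
by apply: eq_bigr => i _; rewrite !mxE.
Qed.

Lemma sum_if_eq n (i : 'I_n) (F : 'I_n -> R) :
  \sum_j (if i == j then F j else 0) = F i.
Proof.
rewrite (bigD1 i) //= eqxx big1 ?addr0 // => j hj.
by rewrite eq_sym (negbTE hj).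
Qed.

Variable N : nat.
Variable G : graph N.
Hypothesis sG : simple_graph G.

Let g (i j : 'I_N) : R := (G (i, j))%:R.

Lemma Gsym i j : G (i, j) = G (j, i).
Proof. by move: sG => /andP[/forallP /(_ i) /forallP /(_ j) /eqP]. Qed.

Lemma deg_sum i : ((#|[set k | G (i, k)]|)%:R : R) = \sum_k g i k.
Proof.
rewrite -sum1_card natr_sum big_mkcond; apply: eq_bigr => k _; rewrite inE /g.
by case: (G (i, k)).
Qed.

Lemma lapE i j : laplacian R G i j = (if i == j then \sum_k g i k else 0) - g i j.
Proof. by rewrite mxE deg_sum. Qed.

Lemma lap_sym : (laplacian R G)^T = laplacian R G.
Proof.
apply/matrixP => i j; rewrite mxE !lapE /g Gsym.
by have [->|hij] := eqVneq i j; rewrite ?eqxx // eq_sym (negbTE hij).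
Qed.

Lemma lap_row0 : laplacian R G *m (const_mx 1 : 'cV[R]_N) = 0.
Proof.
apply/matrixP => i j; rewrite !mxE.
under eq_bigr do rewrite lapE mxE mulr1.
by rewrite sumrB sum_if_eq subrr.
Qed.

Lemma lap_psd (v : 'cV[R]_N) : 0 <= bf (laplacian R G) v v.
Proof.
set x := fun i => v i 0.
have h1 : bf (laplacian R G) v v = \sum_i \sum_j g i j * x i * (x i - x j).
  rewrite bf_sum; apply: eq_bigr => i _.
  under eq_bigr do rewrite lapE.
  have -> : \sum_j (x i * ((if i == j then \sum_k g i k else 0) - g i j) * x j)
     = \sum_j (if i == j then x i * (\sum_k g i k) * x j else 0) - \sum_j x i * g i j * x j.
    rewrite -sumrB; apply: eq_bigr => j _; case: ifP => _; ring.
  rewrite sum_if_eq mulr_sumr mulr_suml -sumrB; apply: eq_bigr => j _; ring.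
have h2 : bf (laplacian R G) v v = \sum_i \sum_j g i j * x j * (x j - x i).
  rewrite h1 exchange_big /=; apply: eq_bigr => i _; apply: eq_bigr => j _.
  by rewrite /g Gsym.
have : 2 * bf (laplacian R G) v v = \sum_i \sum_j g i j * (x i - x j) ^+ 2.
  rewrite mulr2n mulrDl mul1r [in X in X + _]h1 h2 -big_split /=.
  apply: eq_bigr => i _; rewrite -big_split /=; apply: eq_bigr => j _; ring.
have : 0 <= \sum_i \sum_j g i j * (x i - x j) ^+ 2.
  apply: sumr_ge0 => i _; apply: sumr_ge0 => j _; apply: mulr_ge0 => //.
  by rewrite sqr_ge0.
move=> h0 h; lra.
Qed.

End Lap.

Section Lbar.
Variable R : realType.
Variable N : nat.
Variable p : {ffun graph N -> R}.
Hypothesis hp : graph_distribution p.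

Lemma bf_summ n (I : finType) (F : I -> 'M[R]_n) x y :
  bf (\sum_k F k) x y = \sum_k bf (F k) x y.
Proof. by rewrite /bf mulmx_sumr mulmx_suml summxE. Qed.

Lemma Lbar_sym : (Lbar p)^T = Lbar p.
Proof.
rewrite /Lbar linear_sum /=; apply: eq_bigr => G _.
rewrite linearZ /=.
have [->|hG] := eqVneq (p G) 0; first by rewrite !scale0r.
by rewrite lap_sym //; case: hp => _ [_ /(_ G hG)].
Qed.

Lemma Lbar_row0 : Lbar p *m (const_mx 1 : 'cV[R]_N) = 0.
Proof.
rewrite /Lbar mulmx_suml big1 // => G _.
rewrite -scalemxAl.
have [->|hG] := eqVneq (p G) 0; first by rewrite !scale0r.
by rewrite lap_row0 ?scaler0 //; case: hp => _ [_ /(_ G hG)].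
Qed.

Lemma Lbar_psd v : 0 <= bf (Lbar p) v v.
Proof.
rewrite /Lbar bf_summ; apply: sumr_ge0 => G _; rewrite bfZm.
have [->|hG] := eqVneq (p G) 0; first by rewrite mul0r.
apply: mulr_ge0; first by case: hp => /(_ G).
by apply: lap_psd; case: hp => _ [_ /(_ G hG)].
Qed.

End Lbar.
Section Asym.
Variable R : realType.

Lemma beta_gt0 (b tau : R) t : 0 < b -> 0 < beta_w b tau t.
Proof. by move=> b0; rewrite /beta_w divr_gt0 // powR_gt0 // ltr0Sn. Qed.

Lemma alpha_ge0 (a tau : R) t : 0 < a -> 0 <= alpha_w a tau t.
Proof. by move=> a0; rewrite /alpha_w divr_ge0 // ?ltW // powR_ge0. Qed.

Lemma ratio_small (a b tau1 tau2 delta : R) :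
  0 < a -> 0 < b -> tau2 < tau1 -> 0 < delta ->
  exists T : nat, forall t, (T <= t)%N ->
    alpha_w a tau1 t <= delta * beta_w b tau2 t.
Proof.
move=> a0 b0 t12 d0.
set g := tau1 - tau2.
have g0 : 0 < g by rewrite subr_gt0.
set K := a / (delta * b).
have K0 : 0 <= K by rewrite divr_ge0 ?ltW // mulr_gt0.
set T := Num.Def.archi_bound (K `^ g^-1).
exists T => t hT.
set x : R := (t.+1)%:R.
have x0 : 0 < x by rewrite ltr0Sn.
have hx : K `^ g^-1 <= x.
  apply: ltW; apply: lt_le_trans (archi_boundP (powR_ge0 _ _)) _.
  by rewrite ler_nat (leq_trans hT) // leqnSn.
have hxg : K <= x `^ g.
  have := @ge0_ler_powR R g (ltW g0) _ _ (powR_ge0 K g^-1) (ltW x0) hx.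
  by rewrite -powRrM mulVf ?gt_eqF // powRr1.
have e1 : x `^ tau1 = x `^ g * x `^ tau2.
  rewrite -powRD; first by rewrite /g subrK.
  by apply/implyP => _; rewrite gt_eqF.
rewrite /alpha_w /beta_w -/x e1.
have p2 : 0 < x `^ tau2 by apply: powR_gt0.
have pg : 0 < x `^ g by apply: powR_gt0.
rewrite ler_pdivrMr ?mulr_gt0 //.
have -> : delta * (b / x `^ tau2) * (x `^ g * x `^ tau2) = delta * b * x `^ g.
  by field; rewrite gt_eqF.
by rewrite /K ler_pdivrMr ?mulr_gt0 // mulrC in hxg.
Qed.

End Asym.
Section Blocks.
Variable R : realType.
Variables (N M : nat).

Lemma dot_mxcol (x y : forall i : 'I_N, 'cV[R]_M) :
  dot (\mxcol_i x i) (\mxcol_i y i) = \sum_i dot (x i) (y i).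
Proof. by rewrite /dot tr_mxcol mul_mxrow_mxcol summxE. Qed.

Lemma bf_kron (L : 'M[R]_N) (x y : forall i : 'I_N, 'cV[R]_M) :
  bf (kronI M L) (\mxcol_i x i) (\mxcol_i y i) = \sum_i \sum_j L i j * dot (x i) (y j).
Proof.
rewrite /bf /kronI tr_mxcol mul_mxrow_mxblock mul_mxrow_mxcol summxE exchange_big /=.
apply: eq_bigr => j _; rewrite mulmx_suml summxE; apply: eq_bigr => i _.
by rewrite mul_mx_scalar -scalemxAl mxE.
Qed.

Lemma bf_kron_consl (L : 'M[R]_N) a (y : forall i : 'I_N, 'cV[R]_M) :
  (forall j, \sum_i L i j = 0) ->
  bf (kronI M L) (cons_vec N a) (\mxcol_i y i) = 0.
Proof.
move=> hc; rewrite /cons_vec bf_kron exchange_big /= big1 // => j _.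
by rewrite -mulr_suml hc mul0r.
Qed.

Lemma bf_kron_consr (L : 'M[R]_N) a (y : forall i : 'I_N, 'cV[R]_M) :
  (forall i, \sum_j L i j = 0) ->
  bf (kronI M L) (\mxcol_i y i) (cons_vec N a) = 0.
Proof.
move=> hc; rewrite /cons_vec bf_kron big1 // => i _.
by rewrite -mulr_suml hc mul0r.
Qed.

Definition slice (x : forall i : 'I_N, 'cV[R]_M) (m : 'I_M) : 'cV[R]_N :=
  \col_i (x i m 0).

Lemma bf_kron_slices (L : 'M[R]_N) (x : forall i : 'I_N, 'cV[R]_M) :
  bf (kronI M L) (\mxcol_i x i) (\mxcol_i x i) = \sum_m bf L (slice x m) (slice x m).
Proof.
rewrite bf_kron.
under eq_bigr do under eq_bigr do rewrite dotE mulr_sumr.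
under [RHS]eq_bigr do rewrite bf_sum.
under [LHS]eq_bigr do rewrite exchange_big /=.
rewrite [LHS]exchange_big /=; apply: eq_bigr => m _; apply: eq_bigr => i _.
by apply: eq_bigr => j _; rewrite !mxE; ring.
Qed.

Lemma dot_slices (x : forall i : 'I_N, 'cV[R]_M) :
  dot (\mxcol_i x i) (\mxcol_i x i) = \sum_m dot (slice x m) (slice x m).
Proof.
rewrite dot_mxcol; under eq_bigr do rewrite dotE.
under [RHS]eq_bigr do rewrite dotE.
by rewrite exchange_big /=; apply: eq_bigr => m _; apply: eq_bigr => i _; rewrite !mxE.
Qed.

Lemma slice_sum0 (x : forall i : 'I_N, 'cV[R]_M) :
  (forall a : 'cV[R]_M, (cons_vec N a)^T *m (\mxcol_i x i) = 0) ->
  forall m, \sum_i (slice x m) i 0 = 0.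
Proof.
move=> h m; have := congr1 (fun A : 'M[R]_1 => A 0 0) (h (delta_mx m 0)).
rewrite /cons_vec tr_mxcol mul_mxrow_mxcol summxE mxE => e.
apply: etrans e; apply: eq_bigr => i _; rewrite !mxE (bigD1 m) //= big1 ?addr0.
  by rewrite !mxE !eqxx mul1r.
by move=> k hk; rewrite !mxE (negbTE hk) mul0r.
Qed.

Lemma cons_dot (a : 'cV[R]_M) : dot (cons_vec N a) (cons_vec N a) = N%:R * dot a a.
Proof. by rewrite /cons_vec dot_mxcol sumr_const card_ord mulr_natl. Qed.

End Blocks.
Section KH.
Variable R : realType.
Variables (N M : nat) (Mn : 'I_N -> nat).
Variables (H : forall n : 'I_N, 'M[R]_(Mn n, M)) (Rm : forall n : 'I_N, 'M[R]_(Mn n)).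

Lemma calH_cons (a : 'cV[R]_M) : calH H *m cons_vec N a = \mxcol_i (H i *m a).
Proof.
rewrite /calH /cons_vec mul_mxblock_mxrow; apply: eq_mxcol => i.
rewrite (bigD1 i) //= eqxx big1 ?addr0 // => j hj.
by rewrite eq_sym (negbTE hj) mul0mx.
Qed.

Lemma calK_col (y : forall i : 'I_N, 'cV[R]_(Mn i)) :
  calK H Rm *m \mxcol_i y i = \mxcol_i (Kgain H Rm i *m y i).
Proof.
rewrite /calK mul_mxblock_mxrow; apply: eq_mxcol => i.
rewrite (bigD1 i) //= eqxx big1 ?addr0 // => j hj.
by rewrite eq_sym (negbTE hj) mul0mx.
Qed.

Lemma KH_cons (a : 'cV[R]_M) : Sigma_c H Rm \in unitmx -> (0 < N)%N ->
  bf (calK H Rm *m calH H) (cons_vec N a) (cons_vec N a) =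
  dot (cons_vec N a) (cons_vec N a).
Proof.
move=> hU N0.
rewrite /bf -mulmxA -mulmxA calH_cons calK_col.
rewrite (_ : (cons_vec N a)^T = \mxrow_(i < N) a^T); last exact: tr_mxcol.
rewrite mul_mxrow_mxcol.
have -> : \sum_i a^T *m (Kgain H Rm i *m (H i *m a)) =
   a^T *m (invmx (Sigma_c H Rm) *m \sum_i ((H i)^T *m invmx (Rm i) *m H i)) *m a.
  rewrite mulmx_sumr mulmx_sumr mulmx_suml; apply: eq_bigr => i _.
  by rewrite /Kgain !mulmxA.
have -> : \sum_i ((H i)^T *m invmx (Rm i) *m H i) = N%:R *: Sigma_c H Rm.
  rewrite /Sigma_c scalerA mulfV ?scale1r //.
  by rewrite pnatr_eq0 -lt0n.
rewrite -scalemxAr mulVmx // -scalemxAr -scalemxAl mulmx1 cons_dot.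
by rewrite [LHS]mxE.
Qed.

End KH.
Section Final.
Variable R : realType.

Lemma kron_consl' N M (L : 'M[R]_N) a (y : 'cV[R]_(\sum_(i < N) M)) :
  (forall j, \sum_i L i j = 0) -> bf (kronI M L) (cons_vec N a) y = 0.
Proof. by move=> h; rewrite -(submxcolK y); apply: bf_kron_consl. Qed.

Lemma kron_consr' N M (L : 'M[R]_N) a (y : 'cV[R]_(\sum_(i < N) M)) :
  (forall i, \sum_j L i j = 0) -> bf (kronI M L) y (cons_vec N a) = 0.
Proof. by move=> h; rewrite -(submxcolK y); apply: bf_kron_consr. Qed.

Lemma dotDD n (u w : 'cV[R]_n) : dot u w = 0 -> dot (u + w) (u + w) = dot u u + dot w w.
Proof.
move=> h; rewrite -!bf1 bfDl !bfDr !bf1 h (dotC w u) h; ring.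
Qed.

Lemma bfE_bound n (E : 'M[R]_n) z (eps : R) : opnorm E <= eps ->
  - (eps * dot z z) <= bf E z z.
Proof.
move=> hE; rewrite bf_dot.
have h1 := cs z (E *m z).
have h2 := opnorm_le E z.
have h3 : vnorm (E *m z) <= eps * vnorm z.
  apply: le_trans h2 _; apply: ler_wpM2r => //; apply: vnorm_ge0.
have h4 : vnorm z * vnorm (E *m z) <= eps * dot z z.
  rewrite -vnorm_mul mulrA [eps * _]mulrC -mulrA; apply: ler_wpM2l => //.
  apply: vnorm_ge0.
rewrite lerNl; apply: le_trans h4; apply: le_trans h1; rewrite -normrN; apply: ler_norm.
Qed.

End Final.
Unset Implicit Arguments. Set Strict Implicit. Set Printing Implicit Defensive.
Theorem proposition5p6 (R : realType) (N M : nat) (Mn : 'I_N -> nat)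
    (H : forall n : 'I_N, 'M[R]_(Mn n, M)) (Rm : forall n : 'I_N, 'M[R]_(Mn n))
    (p : {ffun graph N -> R}) (a b tau1 tau2 eps1 : R) :
  (forall n, spd (Rm n)) ->
  Sigma_c H Rm \in unitmx ->
  graph_distribution p ->
  lambda2_pos (Lbar p) ->
  0 < a -> 0 < b ->
  0 < tau2 -> tau2 <= tau1 -> tau1 <= 1 ->
  0 < eps1 -> tau2 + (2 + eps1)^-1 + 2^-1 < tau1 ->
  forall eps : R, 0 < eps < 1 ->
  exists (t_eps : nat) (c_eps : R), 0 < c_eps /\
    forall t : nat, (t_eps <= t)%N ->
    forall (Kt : 'M[R]_(\sum_(i < N) M, \sum_(i < N) Mn i))
           (z w : 'cV[R]_(\sum_(i < N) M)),
      opnorm (Kt *m calH H - calK H Rm *m calH H) <= eps ->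
      is_Cperp_proj z w ->
      c_eps * beta_w b tau2 t * vnorm w ^+ 2 <=
        qform z (beta_w b tau2 t *: kronI M (Lbar p)
                 + alpha_w a tau1 t *: (Kt *m calH H)).
Proof.
move=> _ hU hp l2 a0 b0 t20 t21 t11 e10 ht eps /andP[eps0 epsl1].
set L := Lbar p.
have Ls : L^T = L := @Lbar_sym _ _ p hp.
have Lp : forall v, 0 <= bf L v v := @Lbar_psd _ _ p hp.
have L1 : L *m (const_mx 1 : 'cV[R]_N) = 0 := @Lbar_row0 _ _ p.
have [lam [lam0 hlam]] := spectral_gap Ls Lp L1 l2.
have rows0 i : \sum_j L i j = 0.
  have := congr1 (fun A : 'cV[R]_N => A i 0) L1; rewrite !mxE => e.
  by apply: etrans e; apply: eq_bigr => j _; rewrite mxE mulr1.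
have cols0 j : \sum_i L i j = 0.
  by apply: etrans (rows0 j); apply: eq_bigr => i _; rewrite -[in LHS]Ls mxE.
have N0 : (0 < N)%N.
  case: l2 => s [[_ hs] s1].
  have := size_char_poly L; rewrite hs size_prod_XsubC => -[e].
  rewrite lt0n -e; apply/negP => /eqP s0; move: s1; clear hs.
  by case: s e s0 => [|? [|? ?]] //= _ _; rewrite ltxx.
have t12 : tau2 < tau1.
  have : 0 < (2 + eps1)^-1 by rewrite invr_gt0 addr_gt0.
  have : 0 < (2 : R)^-1 by rewrite invr_gt0.
  lra.
set P := calK H Rm *m calH H.
have [C [C0 hC]] := bf_bound P.
have e1 : 0 < 1 - eps by rewrite subr_gt0.
set D := C ^+ 2 / (1 - eps) + C + 1.
have D0 : 0 < D by rewrite /D ltr_pwDr // addr_ge0 // divr_ge0 ?sqr_ge0 ?ltW.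
set delta := lam / (2 * D).
have delta0 : 0 < delta by rewrite divr_gt0 // mulr_gt0.
have [T hT] := ratio_small a0 b0 t12 delta0.
exists T, (lam / 2); split; first by rewrite divr_gt0.
move=> t tT Kt z w hE [[aa hza] hw].
set al := alpha_w a tau1 t; set be := beta_w b tau2 t.
have hab : al <= delta * be := hT t tT.
have al0 : 0 <= al := alpha_ge0 tau1 t a0.
have be0 : 0 < be := beta_gt0 tau2 t b0.
set u := cons_vec N aa.
have zE : z = u + w by rewrite /u -hza subrK.
set E := Kt *m calH H - P.
have KtE : Kt *m calH H = P + E by rewrite /E addrC subrK.
rewrite /qform -/(bf _ z z) bfDm !bfZm KtE bfDm.
have wE : w = \mxcol_i submxcol w i by rewrite submxcolK.
have hK : bf (kronI M L) z z = bf (kronI M L) w w.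
  rewrite zE bfDl !bfDr !kron_consl' // kron_consr' //; ring.
have hKw : lam * dot w w <= bf (kronI M L) w w.
  rewrite [in X in _ <= X]wE bf_kron_slices [in X in _ * X]wE dot_slices mulr_sumr.
  apply: ler_sum => m _; apply: hlam; apply: slice_sum0; by rewrite -wE.
have huw : dot u w = 0 by rewrite /dot hw mxE.
have hwu : dot w u = 0 by rewrite dotC.
set un := vnorm u; set wn := vnorm w.
have un0 : 0 <= un := vnorm_ge0 u.
have wn0 : 0 <= wn := vnorm_ge0 w.
have U2 : dot u u = un ^+ 2 by rewrite vnorm_sq.
have W2 : dot w w = wn ^+ 2 by rewrite vnorm_sq.
have hP : un ^+ 2 - 2 * C * un * wn - C * wn ^+ 2 <= bf P z z.
  rewrite zE bfDl !bfDr KH_cons // -/u U2.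
  have q1 : - (C * un * wn) <= bf P u w.
    by rewrite lerNl; apply: le_trans (hC u w); rewrite -normrN ler_norm.
  have q2 : - (C * un * wn) <= bf P w u.
    by rewrite lerNl mulrAC; apply: le_trans (hC w u); rewrite -normrN ler_norm.
  have q3 : - (C * wn ^+ 2) <= bf P w w.
    by rewrite lerNl expr2 mulrA; apply: le_trans (hC w w); rewrite -normrN ler_norm.
  set c1 := C * un * wn in q1 q2 *; set c3 := C * wn ^+ 2 in q3 *.
  have -> : 2 * C * un * wn = 2 * c1 by rewrite /c1; ring.
  lra.
have hEz : - (eps * (un ^+ 2 + wn ^+ 2)) <= bf E z z.
  by rewrite -U2 -W2 -dotDD // -zE; apply: bfE_bound.
have hq : 0 <= (1 - eps) * un ^+ 2 - 2 * C * un * wn + C ^+ 2 / (1 - eps) * wn ^+ 2.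
  have : (1 - eps) * ((1 - eps) * un ^+ 2 - 2 * C * un * wn + C ^+ 2 / (1 - eps) * wn ^+ 2)
         = ((1 - eps) * un - C * wn) ^+ 2.
    by field; rewrite gt_eqF.
  move=> h; rewrite -(pmulr_rge0 _ e1) h; apply: sqr_ge0.
have hX : - (D * wn ^+ 2) <= bf P z z + bf E z z.
  rewrite /D.
  have : C ^+ 2 / (1 - eps) * wn ^+ 2 = (C ^+ 2 / (1 - eps)) * wn ^+ 2 by [].
  have w20 : 0 <= wn ^+ 2 by apply: sqr_ge0.
  nra.
have hal : al * (bf P z z + bf E z z) >= - (al * (D * wn ^+ 2)).
  by rewrite -mulrN; apply: ler_wpM2l.
have hD : al * (D * wn ^+ 2) <= lam / 2 * be * wn ^+ 2.
  have : delta * be * (D * wn ^+ 2) = lam / 2 * be * wn ^+ 2.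
    by rewrite /delta; field; rewrite gt_eqF.
  move=> <-; apply: ler_wpM2r => //.
  by rewrite mulr_ge0 ?sqr_ge0 // ltW.
rewrite hK -/wn.
rewrite W2 in hKw.
have : lam * wn ^+ 2 * be <= bf (kronI M L) w w * be by apply: ler_wpM2r => //; apply: ltW.
move: hal hD; set X := bf P z z + bf E z z; set Y := bf (kronI M L) w w.
move=> h1 h2 h3.
nra.
Qed.
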